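(* Every strongly homogeneous separable metrizable zero-dimensional space is strongly discrete homogeneous. In particular, the Cantor set $\mathbb C$, the rationals $\mathbb Q$, the irrationals $\mathbb P$, $\mathbb C\times\mathbb Q$ and $\mathbb C\times\mathbb P$ are strongly discrete homogeneous.
   Context: A Hausdorff space is strongly homogeneous if all of its nonempty clopen subspaces are homeomorphic to each other. A subset $D$ of $X$ is discrete if each point of $X$ has a neighbourhood containing at most one point of $D$. A Hausdorff space $X$ is strongly discrete homogeneous (sDH) if for any two discrete subsets $A,B$ of $X$ and any bijection $f\colon A\to B$, $f$ extends to a homeomorphism of $X$ onto itself. *)

(* Defs.v *)
From HB Require Import structures.
From mathcomp Require Import all_boot all_order all_algebra.
From mathcomp Require Import all_classical all_reals all_analysis.
From mathcomp Require Import Rstruct Rstruct_topology.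
From Stdlib Require Import Reals.
Set Implicit Arguments. Unset Strict Implicit. Unset Printing Implicit Defensive.
Import Order.TTheory GRing.Theory Num.Theory.
Local Open Scope classical_set_scope.
Local Open Scope ring_scope.

Definition separable_space (T : topologicalType) : Prop :=
  exists D : set T, countable D /\ dense D.

Definition metrizable_space (T : topologicalType) : Prop :=
  exists d : T -> T -> Rdefinitions.R,
    (forall x y : T, d x y = 0 <-> x = y) /\
    (forall x y : T, d x y = d y x) /\
    (forall x y z : T, d x z <= d x y + d y z) /\
    (forall U : set T, open U <->
       (forall x, U x -> exists e : Rdefinitions.R, 0 < e /\
          (forall y, d x y < e -> U y))).

Definition zero_dim_space (T : topologicalType) : Prop :=
  forall (x : T) (U : set T), open U -> U x ->
    exists V : set T, clopen V /\ V x /\ V `<=` U.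

Definition homeomorphic_subspaces (T : topologicalType) (A B : set T) : Prop :=
  exists f g : T -> T,
    (forall x, A x -> B (f x)) /\ (forall y, B y -> A (g y)) /\
    (forall x, A x -> g (f x) = x) /\ (forall y, B y -> f (g y) = y) /\
    {within A, continuous f} /\ {within B, continuous g}.

Definition strongly_homogeneous (T : topologicalType) : Prop :=
  hausdorff_space T /\
  forall A B : set T, clopen A -> clopen B -> A !=set0 -> B !=set0 ->
    homeomorphic_subspaces A B.

Definition discrete_subset (T : topologicalType) (D : set T) : Prop :=
  forall x : T, exists U : set T, nbhs x U /\
    (forall a b, U a -> U b -> D a -> D b -> a = b).

Definition self_homeomorphism (T : topologicalType) (h : T -> T) : Prop :=
  exists g : T -> T, cancel h g /\ cancel g h /\ continuous h /\ continuous g.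

(* A bijection
   f : A -> B is represented by a function f : T -> T mapping A bijectively
   onto B. *)
Definition sDH (T : topologicalType) : Prop :=
  hausdorff_space T /\
  forall (A B : set T) (f : T -> T),
    discrete_subset A -> discrete_subset B ->
    (forall a, A a -> B (f a)) ->
    (forall a a', A a -> A a' -> f a = f a' -> a = a') ->
    (forall b, B b -> exists2 a, A a & f a = b) ->
    exists h : T -> T, self_homeomorphism h /\ (forall a, A a -> h a = f a).

(* Main.v *)
Require Import Defs.
From mathcomp Require Import all_boot all_order all_algebra all_classical all_reals all_analysis.
From mathcomp Require Import Rstruct Rstruct_topology ring lra.
Import Order.TTheory GRing.Theory Num.Theory.
Local Open Scope classical_set_scope.
Local Open Scope ring_scope.
Set Implicit Arguments. Unset Strict Implicit. Unset Printing Implicit Defensive.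

Notation RR := Rdefinitions.R.

Lemma min2 (a b : RR) : 0 < a -> 0 < b -> exists c : RR, [/\ 0 < c, c <= a & c <= b].
Proof.
move=> a0 b0; exists (Num.min a b); split.
- by rewrite lt_min a0 b0.
- by rewrite ge_min lexx.
- by rewrite ge_min lexx orbT.
Qed.

Section Metric.
Variable T : topologicalType.
Variable d : T -> T -> RR.
Hypothesis d0 : forall x y : T, d x y = 0 <-> x = y.
Hypothesis dsym : forall x y : T, d x y = d y x.
Hypothesis dtri : forall x y z : T, d x z <= d x y + d y z.
Hypothesis dopen : forall U : set T, open U <->
       (forall x, U x -> exists e : RR, 0 < e /\ (forall y, d x y < e -> U y)).

Lemma dge0 x y : 0 <= d x y.
Proof.
have := dtri x y x; rewrite (dsym y x) (proj2 (d0 x x) erefl) => h; lra.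
Qed.

Lemma dxx x : d x x = 0. Proof. exact: (proj2 (d0 x x) erefl). Qed.

Lemma ball_open x e : open [set y | d x y < e].
Proof.
apply/dopen => y /= hy; exists (e - d x y); split; first lra.
move=> w hw; have := dtri x y w; lra.
Qed.

Lemma nbhs_ball x (N : set T) : nbhs x N -> exists e : RR, 0 < e /\ (forall y, d x y < e -> N y).
Proof.
rewrite nbhsE => -[B [oB Bx] BN].
have [e [e0 he]] := (proj1 (dopen B) oB x Bx).
by exists e; split => // y /he /BN.
Qed.

Lemma ball_nbhs x e : 0 < e -> nbhs x [set y | d x y < e].
Proof.
move=> e0; apply: open_nbhs_nbhs; split; first exact: ball_open.
by rewrite /= dxx.
Qed.

Lemma open_ball_sub (U : set T) x : open U -> U x -> exists e : RR, 0 < e /\ (forall y, d x y < e -> U y).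
Proof. by move=> oU Ux; apply: (proj1 (dopen U) oU x Ux). Qed.

Lemma open_neq (z : T) : open [set y : T | y <> z].
Proof.
apply/dopen => y /= yz; exists (d y z); split.
  by rewrite lt_neqAle dge0 andbT eq_sym; apply/eqP => /d0.
by move=> w hw wz; subst w; rewrite ltxx in hw.
Qed.

Lemma closed1 (z : T) : closed [set z].
Proof.
rewrite -openC; have -> : ~` [set z] = [set y : T | y <> z] by [].
exact: open_neq.
Qed.

Lemma deq x y : (forall e : RR, 0 < e -> d x y < e) -> x = y.
Proof.
move=> h; apply/d0; apply/eqP; rewrite eq_le dge0 andbT.
rewrite leNgt; apply/negP => hp; have := h _ hp; lra.
Qed.

End Metric.

Lemma choiceE X Y (P : X -> Y -> Prop) : (forall x, exists y, P x y) -> exists f, forall x, P x (f x).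
Proof. by move=> /choice [f hf]; exists f. Qed.
Arguments choiceE {X Y} P _.

Lemma small_inv (e : RR) : 0 < e -> exists k : nat, (k.+1%:R)^-1 < e.
Proof.
move=> e0; exists (Num.trunc e^-1).
have h := truncnS_gt e^-1.
by rewrite invf_plt ?posrE ?ltr0n ?invr_gt0.
Qed.

Lemma inv_nat_le (m n : nat) : (m <= n)%N -> (n.+1%:R : RR)^-1 <= (m.+1%:R)^-1.
Proof.
move=> mn; rewrite lef_pV2 ?posrE ?ltr0n // ler_nat ltnS //.
Qed.

Lemma inv_nat_pos (n : nat) : 0 < (n.+1%:R : RR)^-1.
Proof. by rewrite invr_gt0 ltr0n. Qed.

Record WProps (T : topologicalType) (D : set T) (z : T) (W : T -> nat -> set T) : Prop := {
 wclo : forall a k, D a -> clopen (W a k);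
 wmem : forall a k, D a -> W a k a;
 wdec : forall a k, D a -> W a k.+1 `<=` W a k;
 wstrict : forall a k, D a -> exists x, W a k x /\ ~ W a k.+1 x;
 wonly : forall a x, D a -> (forall k, W a k x) -> x = a;
 wbase : forall a N, D a -> nbhs a N -> exists k, W a k `<=` N;
 wdisj : forall a a' x, D a -> D a' -> W a 0 x -> W a' 0 x -> a = a';
 wDW : forall a a', D a -> D a' -> W a 0 a' -> a' = a;
 wuclo : clopen [set x | exists2 a, D a & W a 0 x];
 wuz : ~ (exists2 a, D a & W a 0 z) }.

Fixpoint Wf (T : Type) (G : T -> set T) (S : T * nat * set T -> set T) (a : T) (k : nat) : set T :=
  match k with 0 => G a | k'.+1 => S (a, k', Wf G S a k') end.

Section Construct.
Variable T : topologicalType.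
Variable d : T -> T -> RR.
Hypothesis d0 : forall x y : T, d x y = 0 <-> x = y.
Hypothesis dsym : forall x y : T, d x y = d y x.
Hypothesis dtri : forall x y z : T, d x z <= d x y + d y z.
Hypothesis dopen : forall U : set T, open U <->
       (forall x, U x -> exists e : RR, 0 < e /\ (forall y, d x y < e -> U y)).
Hypothesis zd : zero_dim_space T.
Hypothesis sep : separable_space T.
Hypothesis noiso : forall p : T, ~ open [set p].
Let Dxx := dxx d0.
Let Dge0 := dge0 d0 dsym dtri.
Let Bopen := ball_open dtri dopen.
Let Nball := nbhs_ball dopen.
Let Bnbhs := ball_nbhs d0 dtri dopen.
Let Osub := open_ball_sub dopen.
Let Oneq := open_neq d0 dsym dtri dopen.
Let Cl1 := closed1 d0 dsym dtri dopen.
Let Deq := deq d0 dsym dtri.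

Lemma nonisolated (U : set T) a : open U -> U a -> exists x, U x /\ x <> a.
Proof.
move=> oU Ua; case: (pselect (exists x, U x /\ x <> a)) => // hn; exfalso.
suff h : [set a] = U by case: (@noiso a); rewrite h.
apply/seteqP; split => [y -> //|y Uy].
by apply: contrapT => ya; apply: hn; exists y.
Qed.

Lemma construct (D : set T) (z : T) : discrete_subset D -> ~ D z ->
  exists W, WProps D z W.
Proof.
move=> dD Dz.
have [e He] : exists e : T -> RR, forall a, D a -> 0 < e a /\
    (forall a', D a' -> d a a' < e a -> a' = a).
  apply: (choiceE (fun a (r : RR) => D a -> 0 < r /\ (forall a', D a' -> d a a' < r -> a' = a))).
  move=> a; have [U [nU hU]] := dD a.
  have [r [r0 hr]] := Nball nU.
  exists r => Da; split => // a' Da' h.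
  apply: hU => //; [exact: hr | apply: hr; rewrite Dxx //].
have sep2 : forall a a' y, D a -> D a' -> d a y < e a / 2 -> d a' y < e a' / 2 -> a = a'.
  move=> a a' y Da Da' h1 h2.
  have := dtri a y a'; rewrite (dsym y a') => h3.
  have [e1 f1] := He a Da; have [e2 f2] := He a' Da'.
  case: (leP (e a') (e a)) => h4.
    by apply/esym/f1 => //; lra.
  by apply: f2 => //; rewrite dsym; lra.
have [idx Hidx] : exists idx : T -> nat, forall a a', D a -> D a' -> idx a = idx a' -> a = a'.
  case: sep => D0 [cD0 dD0].
  have [i0 Hi0] := countable_injP _ cD0.
  have [c Hc] : exists c : T -> T, forall a, D a -> D0 (c a) /\ d a (c a) < e a / 2.
    apply: (choiceE (fun a c => D a -> D0 c /\ d a c < e a / 2)) => a.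
    case: (pselect (D a)) => Da; last by exists a.
    have [e0 _] := He a Da.
    have [c [c1 c2]] : ([set y | d a y < e a / 2] `&` D0) !=set0.
      apply: dD0; last exact: Bopen.
      by exists a; rewrite /= Dxx; lra.
    by exists c.
  exists (fun a => i0 (c a)) => a a' Da Da' h.
  have [ca1 ca2] := Hc a Da; have [cb1 cb2] := Hc a' Da'.
  have cc : c a = c a' by apply: Hi0 => //; rewrite inE.
  by apply: (sep2 _ _ (c a) Da Da') => //; rewrite cc.
have [rho Hrho] : exists rho : T -> RR, forall a, D a -> [/\ 0 < rho a, rho a <= e a / 2 &
    rho a <= ((idx a).+1%:R)^-1].
  apply: (choiceE (fun a (r : RR) => D a -> [/\ 0 < r, r <= e a / 2 & r <= ((idx a).+1%:R)^-1])).
  move=> a; case: (pselect (D a)) => Da; last by exists 0.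
  have [e0 _] := He a Da.
  have [r [r1 r2 r3]] := @min2 (e a / 2) (((idx a).+1%:R)^-1) ltac:(lra) (inv_nat_pos _).
  by exists r.
have [G HG] : exists G : T -> set T, forall a, D a -> [/\ clopen (G a), G a a &
    forall y, G a y -> d a y < rho a /\ y <> z].
  apply: (choiceE (fun a (G : set T) => D a -> [/\ clopen G, G a &
    forall y, G y -> d a y < rho a /\ y <> z])).
  move=> a; case: (pselect (D a)) => Da; last by exists set0.
  have [r0 _ _] := Hrho a Da.
  have h1 : d a a < rho a by rewrite Dxx.
  have h2 : a <> z by move=> az; apply: Dz; rewrite -az.
  have [V [cV [Va VO]]] := zd (openI (Bopen a (rho a)) (Oneq z)) (conj h1 h2).
  by exists V; split => // y /VO.
have [S HS] : exists S : T * nat * set T -> set T, forall a k U, clopen U -> U a ->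
    [/\ clopen (S (a, k, U)), S (a, k, U) a, S (a, k, U) `<=` U,
     (forall y, S (a, k, U) y -> d a y < (k.+1%:R)^-1) &
     exists x, U x /\ ~ S (a, k, U) x].
  suff hS : forall p : T * nat * set T, exists V : set T,
    clopen p.2 -> p.2 p.1.1 ->
    [/\ clopen V, V p.1.1, V `<=` p.2, (forall y, V y -> d p.1.1 y < (p.1.2.+1%:R)^-1) &
     exists x, p.2 x /\ ~ V x].
    have [S HS] := choiceE _ hS.
    by exists S => a k U cU Ua; apply: (HS (a, k, U)).
  move=> [[a k] U] /=.
  case: (pselect (clopen U /\ U a)) => [[[oU cU] Ua]|hn]; last first.
    by exists set0 => cU Ua; exfalso; apply: hn.
  have [x [Ux xa]] := nonisolated oU Ua.
  have h1 : (U `&` [set y | d a y < (k.+1%:R)^-1] `&` [set y | y <> x]) a.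
    split; [split => //; rewrite /= Dxx; exact: inv_nat_pos | by move=> ax; apply: xa].
  have [V [cV [Va VO]]] := zd (openI (openI oU (Bopen a _)) (Oneq x)) h1.
  exists V => _ _; split => //.
  - by move=> y /VO [[]].
  - by move=> y /VO [[]].
  - by exists x; split => // /VO [_ /=]; apply.
pose W := Wf G S.
have Wclo : forall a k, D a -> clopen (W a k) /\ W a k a.
  move=> a k Da; elim: k => [|k [c m]]; first by have [? ? _] := HG a Da.
  by have [? ? _ _ _] := HS a k (W a k) c m.
have Wdec : forall a k, D a -> W a k.+1 `<=` W a k.
  by move=> a k Da; have [c m] := Wclo a k Da; have [_ _ h _ _] := HS a k (W a k) c m; exact: h.
have Wball : forall a k y, D a -> W a k.+1 y -> d a y < (k.+1%:R)^-1.
  by move=> a k y Da; have [c m] := Wclo a k Da; have [_ _ _ h _] := HS a k (W a k) c m; exact: h.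
have Wstrict : forall a k, D a -> exists x, W a k x /\ ~ W a k.+1 x.
  by move=> a k Da; have [c m] := Wclo a k Da; have [_ _ _ _ h] := HS a k (W a k) c m; exact: h.
have W0 : forall a y, D a -> W a 0 y -> d a y < rho a /\ y <> z.
  by move=> a y Da; have [_ _ h] := HG a Da; apply: h.
have Wmono : forall a j k, D a -> (j <= k)%N -> W a k `<=` W a j.
  move=> a j k Da; elim: k => [|k IH]; first by rewrite leqn0 => /eqP ->.
  rewrite leq_eqVlt => /orP [/eqP -> //| jk] y /Wdec h.
  by apply: IH => //; apply: h.
have Wcl : forall a, D a -> closed (W a 0) by move=> a Da; have [[]] := Wclo a 0 Da.
have single : forall x, ~ (exists2 a, D a & W a 0 x) ->
    forall Pr : T -> Prop, (forall a b, D a -> D b -> Pr a -> Pr b -> a = b) ->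
    exists r : RR, 0 < r /\ forall a y, D a -> Pr a -> d x y < r -> ~ W a 0 y.
  move=> x nx Pr hPr.
  case: (pselect (exists a, D a /\ Pr a)) => [[a0 [Da0 Pa0]]|hn]; last first.
    by exists 1; split => // a y Da Pa; exfalso; apply: hn; exists a.
  have oc : open (~` W a0 0) by rewrite openC; exact: Wcl.
  have nxa : (~` W a0 0) x by move=> h; apply: nx; exists a0.
  have [r [r0 hr]] := Osub oc nxa.
  exists r; split => // a y Da Pa dy; rewrite (hPr a a0 Da Da0 Pa Pa0); exact: hr.
exists W; constructor.
- by move=> a k Da; case: (Wclo a k Da).
- by move=> a k Da; case: (Wclo a k Da).
- exact: Wdec.
- exact: Wstrict.
- move=> a x Da hx; apply/esym/Deq => r r0.
  have [k hk] := small_inv r0.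
  exact: lt_trans (Wball a k x Da (hx k.+1)) hk.
- move=> a N Da nN; have [r [r0 hr]] := Nball nN.
  have [k hk] := small_inv r0.
  exists k.+1 => y /(Wball _ _ _ Da) h; apply: hr; exact: lt_trans h hk.
- move=> a a' x Da Da' h1 h2.
  have [r1 _] := W0 a x Da h1; have [r2 _] := W0 a' x Da' h2.
  have [_ q1 _] := Hrho a Da; have [_ q2 _] := Hrho a' Da'.
  by apply: (sep2 a a' x Da Da'); lra.
- move=> a a' Da Da' h.
  have [r1 _] := W0 a a' Da h; have [_ q1 _] := Hrho a Da; have [e0 f] := He a Da.
  by apply: f => //; lra.
- split.
    apply/dopen => x [a Da Wx].
    have [[oW _] _] := Wclo a 0 Da.
    have [r [r0 hr]] := Osub oW Wx.
    by exists r; split => // y /hr; exists a.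
  rewrite -openC; apply/dopen => x nx.
  have fin : forall N, exists r : RR, 0 < r /\ forall a y, D a -> (idx a <= N)%N -> d x y < r -> ~ W a 0 y.
    elim => [|N [r [r0 hr]]].
      have [r [r0 hr]] := single x nx (fun a => idx a = 0%N)
        (fun a b Da Db ha hb => Hidx a b Da Db (etrans ha (esym hb))).
      by exists r; split => // a y Da; rewrite leqn0 => /eqP; exact: hr a y Da.
    have [r' [r'0 hr']] := single x nx (fun a => idx a = N.+1)
        (fun a b Da Db ha hb => Hidx a b Da Db (etrans ha (esym hb))).
    have [r'' [r''0 q1 q2]] := min2 r0 r'0.
    exists r''; split => // a y Da; rewrite leq_eqVlt => /orP [/eqP h|h] dy.
      by apply: hr' => //; lra.
    by apply: hr => //; lra.
  have [U [nU hU]] := dD x.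
  have [del [del0 hdel]] := Nball nU.
  have del2 : 0 < del / 2 by lra.
  have [N hN] := small_inv del2.
  have [r1 [r10 hr1]] := fin N.
  have [r2 [r20 hr2]] := single x nx (fun a => d x a < del)
     (fun a b Da Db ha hb => hU a b (hdel a ha) (hdel b hb) Da Db).
  have [r3 [r30 q1 q2]] := min2 del2 r10.
  have [r [r0 q3 q4]] := min2 r30 r20.
  exists r; split => // y dy [a Da Way].
  case: (leqP (idx a) N) => h.
    by apply: (hr1 a y Da h _ Way); lra.
  apply: (hr2 a y Da _ _ Way); last lra.
  have [rr _ ] := W0 a y Da Way; have [_ _ rhoi] := Hrho a Da.
  have h2 : d a y < del / 2.
    apply: (lt_le_trans rr); apply: (le_trans rhoi); apply: ltW.
    exact: le_lt_trans (inv_nat_le (ltnW h)) hN.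
  have := dtri x y a; rewrite (dsym y a); lra.
- by move=> [a Da /(W0 a z Da) []].
Qed.
End Construct.

Definition piece (T : Type) (W : T -> nat -> set T) a k := W a k `\` W a k.+1.
Definition uni (T : Type) (D : set T) (W : T -> nat -> set T) := [set x | exists2 a, D a & W a 0 x].

Section WL.
Variable T : topologicalType.
Variables (D : set T) (z : T) (W : T -> nat -> set T).
Hypothesis HW : WProps D z W.

Lemma wmono a j k : D a -> (j <= k)%N -> W a k `<=` W a j.
Proof.
move=> Da; elim: k => [|k IH]; first by rewrite leqn0 => /eqP ->.
rewrite leq_eqVlt => /orP [/eqP -> //| jk] y /(wdec HW Da) h.
by apply: IH.
Qed.

Lemma level_aux a x n : W a 0 x -> ~ W a n x -> exists k, piece W a k x.
Proof.
move=> h0; elim: n => [//|n IH] hn.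
case: (pselect (W a n x)) => h; first by exists n; split.
exact: IH.
Qed.

Lemma level a x : D a -> W a 0 x -> x <> a -> exists k, piece W a k x.
Proof.
move=> Da h0 xa.
case: (pselect (exists n, ~ W a n x)) => [[n hn]|hn]; first exact: level_aux hn.
exfalso; apply: xa; apply: (wonly HW Da) => k.
by apply: contrapT => h; apply: hn; exists k.
Qed.

Lemma level_uniq a k j x : D a -> piece W a k x -> piece W a j x -> k = j.
Proof.
move=> Da [h1 h2] [h3 h4].
case: (ltngtP k j) => // h; exfalso.
- by apply: h2; apply: (wmono Da h).
- by apply: h4; apply: (wmono Da h).
Qed.

Lemma piece0 a k x : D a -> piece W a k x -> W a 0 x.
Proof. by move=> Da [h _]; apply: (wmono Da (leq0n k)). Qed.

Lemma piece_uniq a a' k k' x : D a -> D a' -> piece W a k x -> piece W a' k' x ->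
  a = a' /\ k = k'.
Proof.
move=> Da Da' h h'.
have aa : a = a' := wdisj HW Da Da' (piece0 Da h) (piece0 Da' h').
by subst a'; split => //; apply: level_uniq h h'.
Qed.

Lemma piece_notD a k x : D a -> piece W a k x -> ~ D x.
Proof.
move=> Da [h1 h2] Dx.
have xa : x = a := wDW HW Da Dx (wmono Da (leq0n k) h1).
by subst x; apply: h2; exact: (wmem HW k.+1 Da).
Qed.

Lemma piece_open a k : D a -> open (piece W a k).
Proof.
move=> Da; apply: openI; first by case: (wclo HW k Da).
by rewrite openC; case: (wclo HW k.+1 Da).
Qed.

Lemma piece_clopen a k : D a -> clopen (piece W a k).
Proof.
move=> Da; apply: clopenI; first exact: (wclo HW k Da).
by apply: (@clopenC _ _ set0); exact: (wclo HW k.+1 Da).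
Qed.

Lemma uniD x : D x -> uni D W x.
Proof. by move=> Dx; exists x => //; exact: (wmem HW 0 Dx). Qed.

Lemma uni_piece x : ~ D x -> uni D W x -> exists a k, D a /\ piece W a k x.
Proof.
move=> nDx [a Da h]; have [|k hk] := level Da h; first by move=> xa; subst x.
by exists a, k.
Qed.

Lemma uniC_open : open (~` uni D W).
Proof. by rewrite openC; case: (wuclo HW). Qed.

End WL.

Lemma cont_local (T U : topologicalType) (g p : T -> U) (P : set T) x :
  open P -> P x -> (forall y, P y -> g y = p y) -> {for x, continuous p} ->
  {for x, continuous g}.
Proof.
move=> oP Px e c N; rewrite e // => /c h.
have nP : nbhs x P := open_nbhs_nbhs (conj oP Px).
have h' : nbhs x (p @^-1` N) := h.
have FF : Filter (nbhs x) := nbhs_filter x.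
have hh := @filterI _ _ FF _ _ h' nP.
suff : nbhs x (g @^-1` N) by [].
have sub : (p @^-1` N `&` P) `<=` (g @^-1` N) by move=> y [hy Py] /=; rewrite e.
exact: filterS sub hh.
Qed.

Definition glue (T : topologicalType) (A : set T) (W : T -> nat -> set T) (f : T -> T)
  (phi : T -> nat -> T -> T) (phiR : T -> T) (x : T) : T :=
  if pselect (A x) then f x else
  if pselect (uni A W x) then
    let i := xget (x, 0%N) [set i | A i.1 /\ piece W i.1 i.2 x] in phi i.1 i.2 x
  else phiR x.

Section Glue.
Variable T : topologicalType.
Variables (A B : set T) (zA zB : T) (W W' : T -> nat -> set T) (f : T -> T).
Variables (phi : T -> nat -> T -> T) (phiR : T -> T).
Hypotheses (HW : WProps A zA W) (HW' : WProps B zB W').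
Hypothesis fAB : forall a, A a -> B (f a).
Hypothesis phimap : forall a k x, A a -> piece W a k x -> piece W' (f a) k (phi a k x).
Hypothesis phicont : forall a k, A a -> {within piece W a k, continuous (phi a k)}.
Hypothesis phiRcont : {within ~` uni A W, continuous phiR}.

Lemma glue_A x : A x -> glue A W f phi phiR x = f x.
Proof. by rewrite /glue; case: pselect. Qed.

Lemma glue_P a k x : A a -> piece W a k x -> glue A W f phi phiR x = phi a k x.
Proof.
move=> Aa hx; rewrite /glue; case: pselect => [Ax|nAx].
  by exfalso; apply: (piece_notD HW Aa hx).
case: pselect => [ux|hn]; last by exfalso; apply: hn; exists a => //; apply: (piece0 HW Aa hx).
have ex : exists i : T * nat, [set i | A i.1 /\ piece W i.1 i.2 x] i by exists (a, k).
case: (xgetPex (x, 0%N) ex) => /=.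
case: (xget _ _) => a' k' /= Aa' h'.
by case: (piece_uniq HW Aa' Aa h' hx) => -> ->.
Qed.

Lemma glue_R x : ~ uni A W x -> glue A W f phi phiR x = phiR x.
Proof.
move=> nx; rewrite /glue; case: pselect => [Ax|nAx].
  by exfalso; apply: nx; apply: (uniD HW).
by case: pselect.
Qed.

Lemma glue_cont : continuous (glue A W f phi phiR).
Proof.
move=> x; case: (pselect (A x)) => Ax.
  move=> N; rewrite glue_A // => nN.
  have [k hk] := wbase HW' (fAB Ax) nN.
  have nW : nbhs x (W x k).
    by apply: open_nbhs_nbhs; split; [case: (wclo HW k Ax) | exact: (wmem HW k Ax)].
  apply: filterS nW => y Wy /=.
  case: (pselect (y = x)) => [->|yx].
    by rewrite glue_A //; apply: hk; apply: (wmem HW' k); apply: fAB.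
  have [j hj] := level HW Ax (wmono HW Ax (leq0n k) Wy) yx.
  rewrite (glue_P Ax hj); apply: hk.
  have [h1 _] := phimap Ax hj.
  have kj : (k <= j)%N.
    rewrite leqNgt; apply/negP => jk; case: hj => _; apply.
    exact: (wmono HW Ax jk).
  exact: (wmono HW' (fAB Ax) kj).
case: (pselect (uni A W x)) => ux.
  have [a [k [Aa hx]]] := uni_piece HW Ax ux.
  apply: (cont_local (p := phi a k) (piece_open HW k Aa) hx).
    by move=> y hy; apply: glue_P.
  have hc := @phicont a k Aa.
  rewrite (continuous_open_subspace _ (piece_open HW k Aa)) in hc.
  by apply: hc; rewrite inE.
apply: (cont_local (p := phiR) (uniC_open HW) ux).
  by move=> y hy; apply: glue_R.
have hc := phiRcont.
rewrite (continuous_open_subspace _ (uniC_open HW)) in hc.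
by apply: hc; rewrite inE.
Qed.

End Glue.

Theorem mainTheorem3 (T : topologicalType) :
  strongly_homogeneous T -> separable_space T -> metrizable_space T ->
  zero_dim_space T -> sDH T.
Proof.
move=> [hT SH] sep [d [d0 [dsym [dtri dopen]]]] zd.
have idh : self_homeomorphism (@id T).
  by exists id; do 3 (split => //); move=> x; exact: cvg_id.
split => // A B f dA dB fAB finj fsurj.
case: (pselect (exists p : T, open [set p])) => [[p op]|noiso'].
  have all_p : forall x : T, x = p.
    have cp : clopen [set p] by split => //; exact: (@closed1 T d d0 dsym dtri dopen p).
    have [g1 [g2 [m1 [m2 [inv1 _]]]]] :=
      SH setT [set p] clopenT cp (ex_intro _ p I) (ex_intro _ p erefl).
    move=> x; rewrite -(inv1 x I) (m1 x I).
    by rewrite -{2}(inv1 p I) (m1 p I).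
  exists id; split => // a _.
  by rewrite (all_p a) (all_p (f p)).
have noiso : forall p : T, ~ open [set p] by move=> p op; apply: noiso'; exists p.
case: (pselect (exists t : T, True)) => [[t _]|nT]; last first.
  by exists id; split => // a; exfalso; apply: nT; exists a.
have outz : forall D : set T, discrete_subset D -> exists z, ~ D z.
  move=> D dD; case: (pselect (exists z, ~ D z)) => // hn; exfalso.
  have allD : forall y, D y by move=> y; apply: contrapT => ny; apply: hn; exists y.
  have [U [nU hU]] := dD t.
  rewrite nbhsE in nU; case: nU => V [oV Vt] VU.
  suff h : [set t] = V by case: (@noiso t); rewrite h.
  apply/seteqP; split => [y -> // | y Vy].
  exact: hU (VU _ Vy) (VU _ Vt) (allD y) (allD t).
have [zA nzA] := outz A dA.
have [zB nzB] := outz B dB.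
have [WA HWA] := construct d0 dsym dtri dopen zd sep noiso dA nzA.
have [WB HWB] := construct d0 dsym dtri dopen zd sep noiso dB nzB.
have [fi Hfi] : exists fi : T -> T, forall b, B b -> A (fi b) /\ f (fi b) = b.
  apply: (choiceE (fun b a => B b -> A a /\ f a = b)) => b.
  case: (pselect (B b)) => Bb; last by exists b.
  by have [a Aa fa] := fsurj b Bb; exists a.
have fif : forall a, A a -> fi (f a) = a.
  move=> a Aa; have [h1 h2] := Hfi (f a) (fAB a Aa); exact: finj.
have [Phi HPhi] : exists Phi : T * nat -> (T -> T) * (T -> T), forall a k, A a ->
    [/\ (forall x, piece WA a k x -> piece WB (f a) k ((Phi (a, k)).1 x)),
        (forall y, piece WB (f a) k y -> piece WA a k ((Phi (a, k)).2 y)),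
        (forall x, piece WA a k x -> (Phi (a, k)).2 ((Phi (a, k)).1 x) = x),
        (forall y, piece WB (f a) k y -> (Phi (a, k)).1 ((Phi (a, k)).2 y) = y)
        & {within piece WA a k, continuous (Phi (a, k)).1} /\
        {within piece WB (f a) k, continuous (Phi (a, k)).2}].
  suff hS : forall p : T * nat, exists q : (T -> T) * (T -> T), A p.1 ->
    [/\ (forall x, piece WA p.1 p.2 x -> piece WB (f p.1) p.2 (q.1 x)),
        (forall y, piece WB (f p.1) p.2 y -> piece WA p.1 p.2 (q.2 y)),
        (forall x, piece WA p.1 p.2 x -> q.2 (q.1 x) = x),
        (forall y, piece WB (f p.1) p.2 y -> q.1 (q.2 y) = y)
        & {within piece WA p.1 p.2, continuous q.1} /\
        {within piece WB (f p.1) p.2, continuous q.2}].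
    have [Phi HPhi] := choiceE _ hS.
    by exists Phi => a k Aa; apply: (HPhi (a, k)).
  move=> [a k] /=; case: (pselect (A a)) => Aa; last by exists (id, id).
  have Bfa := fAB a Aa.
  have [g1 [g2 [m1 [m2 [i1 [i2 [c1 c2]]]]]]] :=
    SH _ _ (piece_clopen HWA k Aa) (piece_clopen HWB k Bfa)
      (wstrict HWA k Aa) (wstrict HWB k Bfa).
  by exists (g1, g2).
have [phiR [psiR [HR1 [HR2 [HR3 [HR4 [HR5 HR6]]]]]]] :=
  SH (~` uni A WA) (~` uni B WB) (@clopenC _ _ set0 (wuclo HWA))
    (@clopenC _ _ set0 (wuclo HWB)) (ex_intro _ zA (wuz HWA)) (ex_intro _ zB (wuz HWB)).
pose phi := fun a k => (Phi (a, k)).1.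
pose psi := fun b k => (Phi (fi b, k)).2.
have phimap : forall a k x, A a -> piece WA a k x -> piece WB (f a) k (phi a k x).
  by move=> a k x Aa; case: (HPhi a k Aa) => h _ _ _ _; apply: h.
have phicont : forall a k, A a -> {within piece WA a k, continuous (phi a k)}.
  by move=> a k Aa; case: (HPhi a k Aa) => _ _ _ _ [c1 _]; exact: c1.
have fiB : forall b, B b -> A (fi b) by move=> b Bb; case: (Hfi b Bb).
have psimap : forall b k y, B b -> piece WB b k y -> piece WA (fi b) k (psi b k y).
  move=> b k y Bb; have [Aa fa] := Hfi b Bb.
  by case: (HPhi (fi b) k Aa); rewrite fa => _ h _ _ _; apply: h.
have psicont : forall b k, B b -> {within piece WB b k, continuous (psi b k)}.
  move=> b k Bb; have [Aa fa] := Hfi b Bb.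
  by case: (HPhi (fi b) k Aa); rewrite fa => _ _ _ _ [_ c2]; exact: c2.
exists (glue A WA f phi phiR); split; last by move=> a Aa; rewrite glue_A.
exists (glue B WB fi psi psiR); split; last split; last split.
- move=> x; case: (pselect (A x)) => Ax.
    by rewrite glue_A // glue_A ?fif //; apply: fAB.
  case: (pselect (uni A WA x)) => ux.
    have [a [k [Aa hx]]] := uni_piece HWA Ax ux.
    rewrite (glue_P _ _ _ HWA Aa hx).
    rewrite (glue_P _ _ _ HWB (fAB a Aa) (phimap _ _ _ Aa hx)).
    rewrite /psi fif //.
    by case: (HPhi a k Aa) => _ _ h _ _; apply: h.
  by rewrite (glue_R _ _ _ HWA ux) (glue_R _ _ _ HWB (HR1 x ux)) HR3.
- move=> y; case: (pselect (B y)) => By.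
    by have [Ay fy] := Hfi y By; rewrite glue_A // glue_A.
  case: (pselect (uni B WB y)) => uy.
    have [b [k [Bb hy]]] := uni_piece HWB By uy.
    rewrite (glue_P _ _ _ HWB Bb hy).
    rewrite (glue_P _ _ _ HWA (fiB b Bb) (psimap _ _ _ Bb hy)).
    have [Aa fa] := Hfi b Bb.
    rewrite /phi /psi.
    case: (HPhi (fi b) k Aa) => _ _ _ h _; apply: h.
    by rewrite fa.
  by rewrite (glue_R _ _ _ HWB uy) (glue_R _ _ _ HWA (HR2 y uy)) HR4.
- exact: (glue_cont HWA HWB fAB phimap phicont HR5).
- exact: (glue_cont HWB HWA fiB psimap psicont HR6).
Qed.
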